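(* Let $\Omega=(0,1)$, let $\Lambda,\beta,\gamma,\mu$ be positive Hölder continuous functions on $[0,1]$, and fix $d_S>0$. Let $\tilde S$ be the unique positive solution of $-d_S\tilde S''=\Lambda-\tilde S$ on $(0,1)$, $\tilde S'(0)=\tilde S'(1)=0$, and assume that the set $\{x\in[0,1]:\beta(x)\tilde S(x)>\gamma(x)+\mu(x)\}$ is nonempty. Then for every sequence $d_{I,n}\to0$ and every sequence $(S_n,I_n)$ of positive solutions of (E) on $\Omega=(0,1)$ with $d_I=d_{I,n}$, there is a subsequence along which $S_n\to S_0$ uniformly on $[0,1]$ for some $S_0\in C([0,1])$ with $S_0>0$ on $[0,1]$, and $\int_0^1 I_n\,dx\to I_0$ for some constant $I_0>0$.
   Context: Problem (E) on $\Omega=(0,1)$ is the steady-state system $$-d_SS''=\Lambda(x)-S-\beta(x)SI+\gamma(x)I,\qquad -d_II''=\beta(x)SI-[\gamma(x)+\mu(x)]I\quad\text{in }(0,1),$$ with $S'(0)=S'(1)=I'(0)=I'(1)=0$; a positive solution means $S>0$, $I>0$ on $[0,1]$. *)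

(* Defs.v *)
From Stdlib Require Import Reals.
Open Scope R_scope.

Definition in01 (x : R) : Prop := 0 <= x <= 1.

Definition cont01_at (f : R -> R) (x0 : R) : Prop :=
  limit1_in f in01 (f x0) x0.

Definition cont01 (f : R -> R) : Prop := forall x, in01 x -> cont01_at f x.

Definition holder01 (f : R -> R) : Prop :=
  exists alpha C : R, 0 < alpha <= 1 /\ 0 <= C /\
    forall x y, in01 x -> in01 y -> x <> y ->
      Rabs (f x - f y) <= C * Rpower (Rabs (x - y)) alpha.

Definition pos01 (f : R -> R) : Prop := forall x, in01 x -> 0 < f x.

(* u is a classical C^2(0,1) /\ C^1([0,1]) function with first derivative u1
   and second derivative u2 on (0,1), satisfying homogeneous Neumann
   boundary conditions u'(0) = u'(1) = 0 (u1 extends continuously to [0,1]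
   with value 0 at the endpoints, which by the mean value theorem means the
   one-sided derivatives of u at 0 and 1 vanish). *)
Definition neumann_C2 (u u1 u2 : R -> R) : Prop :=
  cont01 u /\ cont01 u1 /\
  (forall x, 0 < x < 1 -> derivable_pt_lim u x (u1 x)) /\
  (forall x, 0 < x < 1 -> derivable_pt_lim u1 x (u2 x)) /\
  u1 0 = 0 /\ u1 1 = 0.

Definition is_Stilde (dS : R) (Lam St : R -> R) : Prop :=
  pos01 St /\
  exists S1 S2, neumann_C2 St S1 S2 /\
    forall x, 0 < x < 1 -> - dS * S2 x = Lam x - St x.

Definition pos_sol_E (dS dI : R) (Lam beta gamma mu S I : R -> R) : Prop :=
  pos01 S /\ pos01 I /\
  exists S1 S2 I1 I2,
    neumann_C2 S S1 S2 /\ neumann_C2 I I1 I2 /\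
    (forall x, 0 < x < 1 ->
       - dS * S2 x = Lam x - S x - beta x * S x * I x + gamma x * I x) /\
    (forall x, 0 < x < 1 ->
       - dI * I2 x = beta x * S x * I x - (gamma x + mu x) * I x).

(* Main.v *)
From Stdlib Require Import Reals Lra Lia Classical ClassicalEpsilon ZArith List.
From Coquelicot Require Import Coquelicot.
Require Import Defs.
Open Scope R_scope.

Definition clamp (x : R) : R := Rmin 1 (Rmax 0 x).
Definition ext (f : R -> R) : R -> R := fun x => f (clamp x).

Lemma clamp_in x : in01 (clamp x).
Proof. unfold clamp, in01, Rmin, Rmax. repeat destruct Rle_dec; lra. Qed.

Lemma clamp_id x : in01 x -> clamp x = x.
Proof. unfold clamp, in01, Rmin, Rmax. intros. repeat destruct Rle_dec; lra. Qed.

Lemma clamp_lip x y : Rabs (clamp x - clamp y) <= Rabs (x - y).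
Proof.
  unfold clamp, Rmin, Rmax. repeat destruct Rle_dec;
  unfold Rabs; repeat destruct Rcase_abs; lra.
Qed.

Lemma ext_id f x : in01 x -> ext f x = f x.
Proof. intros; unfold ext; rewrite clamp_id; auto. Qed.

Lemma cont01_eps f : cont01 f ->
  forall x, in01 x -> forall eps, 0 < eps -> exists d, 0 < d /\
   forall y, in01 y -> Rabs (y - x) < d -> Rabs (f y - f x) < eps.
Proof.
  intros H x Hx eps He. destruct (H x Hx eps He) as [d [Hd Hd']].
  exists d; split; auto. intros y Hy Hyx. apply (Hd' y). split; auto.
Qed.

Lemma eps_cont01 f : (forall x, in01 x -> forall eps, 0 < eps -> exists d, 0 < d /\
   forall y, in01 y -> Rabs (y - x) < d -> Rabs (f y - f x) < eps) -> cont01 f.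
Proof.
  intros H x Hx eps He. destruct (H x Hx eps He) as [d [Hd Hd']].
  exists d; split; auto. intros y [Hy Hyx]. apply (Hd' y); auto.
Qed.

Lemma ext_cont f : cont01 f -> forall x, continuity_pt (ext f) x.
Proof.
  intros H x eps He.
  destruct (cont01_eps f H (clamp x) (clamp_in x) eps He) as [d [Hd Hd']].
  exists d; split; auto. intros y [_ Hy].
  simpl in *. unfold R_dist in *. unfold ext. apply Hd'. apply clamp_in.
  eapply Rle_lt_trans. apply clamp_lip. auto.
Qed.

Lemma ext_deriv f x l : 0 < x < 1 -> derivable_pt_lim f x l ->
  derivable_pt_lim (ext f) x l.
Proof.
  intros Hx H eps He. destruct (H eps He) as [d Hd].
  assert (Hp : 0 < Rmin d (Rmin x (1 - x))).
  { destruct d as [d dp]. simpl. repeat apply Rmin_pos; lra. }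
  exists (mkposreal _ Hp). intros h Hh Hhd. simpl in Hhd.
  unfold ext. rewrite (clamp_id x) by (unfold in01; lra).
  rewrite (clamp_id (x + h)).
  - apply Hd; auto. eapply Rlt_le_trans; [apply Hhd|apply Rmin_l].
  - pose proof (Rmin_r d (Rmin x (1-x))). pose proof (Rmin_l x (1-x)).
    pose proof (Rmin_r x (1-x)).
    unfold in01. unfold Rabs in Hhd. destruct Rcase_abs; lra.
Qed.

Lemma MV g dg a b : a < b ->
  (forall c, a <= c <= b -> continuity_pt g c) ->
  (forall c, a < c < b -> derivable_pt_lim g c (dg c)) ->
  exists c, a < c < b /\ g b - g a = dg c * (b - a).
Proof.
  intros Hab Hc Hd.
  assert (pr1 : forall c, a < c < b -> derivable_pt g c).
  { intros c Hc'. exists (dg c). apply Hd; auto. }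
  assert (pr2 : forall c, a < c < b -> derivable_pt id c).
  { intros c _. apply derivable_pt_id. }
  destruct (MVT g id a b pr1 pr2 Hab Hc) as [c [P HP]].
  { intros; apply derivable_continuous_pt, derivable_pt_id. }
  exists c; split; auto.
  rewrite (derive_pt_eq_0 g c (dg c) (pr1 c P) (Hd c P)) in HP.
  rewrite (derive_pt_eq_0 id c 1 (pr2 c P) (derivable_pt_lim_id c)) in HP.
  unfold id in HP. lra.
Qed.

Lemma mono g dg a b : a <= b ->
  (forall c, a <= c <= b -> continuity_pt g c) ->
  (forall c, a < c < b -> derivable_pt_lim g c (dg c)) ->
  (forall c, a < c < b -> 0 <= dg c) -> g a <= g b.
Proof.
  intros Hab Hc Hd Hp. destruct (Req_dec a b) as [->|Hne]; [lra|].
  destruct (MV g dg a b) as [c [Hc' E]]; auto; try lra.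
  specialize (Hp c Hc'). nra.
Qed.

Lemma cont01_opp f : cont01 f -> cont01 (fun x => - f x).
Proof.
  intros H. apply eps_cont01. intros x Hx eps He.
  destruct (cont01_eps f H x Hx eps He) as [d [Hd Hd']]. exists d; split; auto.
  intros y Hy Hyx. specialize (Hd' y Hy Hyx).
  replace (- f y - - f x) with (- (f y - f x)) by ring. rewrite Rabs_Ropp; auto.
Qed.

Lemma neumann_opp u u1 u2 : neumann_C2 u u1 u2 ->
  neumann_C2 (fun x => - u x) (fun x => - u1 x) (fun x => - u2 x).
Proof.
  intros [H1 [H2 [H3 [H4 [H5 H6]]]]]. repeat split.
  - apply cont01_opp; auto.
  - apply cont01_opp; auto.
  - intros x Hx. apply derivable_pt_lim_opp. auto.
  - intros x Hx. apply derivable_pt_lim_opp. auto.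
  - rewrite H5; ring.
  - rewrite H6; ring.
Qed.

Lemma minprin u u1 u2 K : neumann_C2 u u1 u2 ->
  (forall x, 0 < x < 1 -> u x < K -> u2 x < 0) -> forall x, in01 x -> K <= u x.
Proof.
  intros Hn HK x Hx. destruct Hn as [Hc [Hc1 [Hd [Hd1 [H0 H1]]]]].
  destruct (continuity_ab_min (ext u) 0 1) as [xm [Hmin Hxm]]; [lra| |].
  { intros; apply ext_cont; auto. }
  apply Rnot_lt_le; intro Hlt.
  assert (Hum : u xm < K).
  { specialize (Hmin x Hx). rewrite !ext_id in Hmin; auto. lra. }
  assert (Hmin' : forall y, in01 y -> u xm <= u y).
  { intros y Hy. specialize (Hmin y Hy). rewrite !ext_id in Hmin; auto. }
  destruct (cont01_eps u Hc xm Hxm (K - u xm)) as [d [Hdp Hdd]]; [lra|].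
  assert (HuK : forall y, in01 y -> Rabs (y - xm) < d -> u y < K).
  { intros y Hy Hyd. specialize (Hdd y Hy Hyd). unfold Rabs in Hdd.
    destruct Rcase_abs; lra. }
  assert (Hcu : forall c, continuity_pt (ext u) c) by (apply ext_cont; auto).
  assert (Hcu1 : forall c, continuity_pt (ext u1) c) by (apply ext_cont; auto).
  assert (Hdu : forall c, 0 < c < 1 -> derivable_pt_lim (ext u) c (u1 c))
    by (intros; apply ext_deriv; auto).
  assert (Hdu1 : forall c, 0 < c < 1 -> derivable_pt_lim (ext u1) c (u2 c))
    by (intros; apply ext_deriv; auto).
  destruct (Rlt_le_dec xm 1) as [Hx1|Hx1].
  destruct (Rle_lt_dec (u1 xm) 0) as [Hs|Hs].
  -
    set (y := xm + Rmin d (1 - xm) / 2).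
    assert (Hmd := Rmin_l d (1-xm)). assert (Hmd' := Rmin_r d (1-xm)).
    assert (Hmp : 0 < Rmin d (1 - xm)) by (apply Rmin_pos; lra).
    assert (Hy : xm < y <= 1) by (unfold y; lra).
    assert (Hyd : y - xm < d) by (unfold y; lra).
    assert (Hdec : forall t, xm < t <= y -> u1 t < u1 xm).
    { intros t Ht. destruct (MV (ext u1) u2 xm t) as [c [Hct E]]; try lra.
      - intros; auto.
      - intros c Hc'. apply Hdu1. unfold in01 in *; lra.
      - rewrite !ext_id in E by (unfold in01 in *; lra).
        assert (u2 c < 0).
        { apply HK. unfold in01 in *; lra. apply HuK. unfold in01 in *; lra.
          unfold Rabs; destruct Rcase_abs; lra. }
        nra. }
    destruct (MV (ext u) u1 xm y) as [c [Hct E]]; try lra.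
    + intros; auto.
    + intros c Hc'. apply Hdu. unfold in01 in *; lra.
    + rewrite !ext_id in E by (unfold in01 in *; lra).
      assert (u1 c < u1 xm) by (apply Hdec; lra).
      assert (u y < u xm) by nra.
      specialize (Hmin' y). unfold in01 in *. assert (u xm <= u y) by (apply Hmin'; lra). lra.
  - assert (Hx0 : 0 < xm).
    { destruct (Req_dec xm 0) as [E|E]. subst. lra. unfold in01 in *; lra. }
    set (y := xm - Rmin d xm / 2).
    assert (Hmd := Rmin_l d xm). assert (Hmd' := Rmin_r d xm).
    assert (Hmp : 0 < Rmin d xm) by (apply Rmin_pos; lra).
    assert (Hy : 0 <= y < xm) by (unfold y; lra).
    assert (Hyd : xm - y < d) by (unfold y; lra).
    assert (Hdec : forall t, y <= t < xm -> u1 t > u1 xm).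
    { intros t Ht. destruct (MV (ext u1) u2 t xm) as [c [Hct E]]; try lra.
      - intros; auto.
      - intros c Hc'. apply Hdu1. unfold in01 in *; lra.
      - rewrite !ext_id in E by (unfold in01 in *; lra).
        assert (u2 c < 0).
        { apply HK. unfold in01 in *; lra. apply HuK. unfold in01 in *; lra.
          unfold Rabs; destruct Rcase_abs; lra. }
        nra. }
    destruct (MV (ext u) u1 y xm) as [c [Hct E]]; try lra.
    + intros; auto.
    + intros c Hc'. apply Hdu. unfold in01 in *; lra.
    + rewrite !ext_id in E by (unfold in01 in *; lra).
      assert (u1 c > u1 xm) by (apply Hdec; lra).
      assert (u y < u xm) by nra.
      specialize (Hmin' y). unfold in01 in *. assert (u xm <= u y) by (apply Hmin'; lra). lra.
  - assert (xm = 1) by (unfold in01 in *; lra). subst xm.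
    set (y := 1 - Rmin d 1 / 2).
    assert (Hmd := Rmin_l d 1). assert (Hmd' := Rmin_r d 1).
    assert (Hmp : 0 < Rmin d 1) by (apply Rmin_pos; lra).
    assert (Hy : 0 <= y < 1) by (unfold y; lra).
    assert (Hyd : 1 - y < d) by (unfold y; lra).
    assert (Hdec : forall t, y <= t < 1 -> u1 t > u1 1).
    { intros t Ht. destruct (MV (ext u1) u2 t 1) as [c [Hct E]]; try lra.
      - intros; auto.
      - intros c Hc'. apply Hdu1. unfold in01 in *; lra.
      - rewrite !ext_id in E by (unfold in01 in *; lra).
        assert (u2 c < 0).
        { apply HK. unfold in01 in *; lra. apply HuK. unfold in01 in *; lra.
          unfold Rabs; destruct Rcase_abs; lra. }
        nra. }
    destruct (MV (ext u) u1 y 1) as [c [Hct E]]; try lra.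
    + intros; auto.
    + intros c Hc'. apply Hdu. unfold in01 in *; lra.
    + rewrite !ext_id in E by (unfold in01 in *; lra).
      assert (u1 c > u1 1) by (apply Hdec; lra).
      assert (u y < u 1) by nra.
      specialize (Hmin' y). unfold in01 in *. assert (u 1 <= u y) by (apply Hmin'; lra). lra.
Qed.

Lemma maxprin u u1 u2 K : neumann_C2 u u1 u2 ->
  (forall x, 0 < x < 1 -> u x > K -> u2 x > 0) -> forall x, in01 x -> u x <= K.
Proof.
  intros Hn HK x Hx.
  assert (H := minprin _ _ _ (-K) (neumann_opp _ _ _ Hn)).
  cut (-K <= - u x). lra. apply H; auto.
  intros y Hy Hy'. assert (u2 y > 0) by (apply HK; lra). lra.
Qed.

Lemma holder_cont f : holder01 f -> cont01 f.
Proof.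
  intros [al [C [Hal [HC H]]]]. apply eps_cont01. intros x Hx eps He.
  set (e := eps / (C + 1)).
  assert (He' : 0 < e) by (unfold e; apply Rdiv_lt_0_compat; lra).
  exists (Rpower e (1 / al)). split. { unfold Rpower. apply exp_pos. }
  intros y Hy Hyx. destruct (Req_dec y x) as [->|Hne].
  { replace (f x - f x) with 0 by ring. rewrite Rabs_R0; lra. }
  specialize (H y x Hy Hx Hne).
  assert (Ht : 0 < Rabs (y - x)) by (apply Rabs_pos_lt; lra).
  assert (Hp : Rpower (Rabs (y - x)) al < e).
  { replace e with (Rpower (Rpower e (1/al)) al).
    2:{ rewrite Rpower_mult. replace (1 / al * al) with 1 by (field; lra).
        apply Rpower_1; auto. }
    unfold Rpower at 1 2. apply exp_increasing. apply Rmult_lt_compat_l. lra.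
    apply ln_increasing; auto. }
  assert (C * Rpower (Rabs (y - x)) al <= C * e) by (apply Rmult_le_compat_l; lra).
  assert (C * e < eps).
  { unfold e. apply (Rmult_lt_reg_r (C+1)). lra.
    field_simplify; try lra. }
  lra.
Qed.

Lemma cont_max f : cont01 f -> exists M, forall x, in01 x -> f x <= M.
Proof.
  intros H. destruct (continuity_ab_maj (ext f) 0 1) as [xm [Hm Hxm]]; [lra| |].
  { intros; apply ext_cont; auto. }
  exists (ext f xm). intros x Hx. specialize (Hm x Hx). rewrite ext_id in Hm; auto.
Qed.

Lemma cont_min f : cont01 f -> pos01 f -> exists m, 0 < m /\ forall x, in01 x -> m <= f x.
Proof.
  intros H Hp. destruct (continuity_ab_min (ext f) 0 1) as [xm [Hm Hxm]]; [lra| |].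
  { intros; apply ext_cont; auto. }
  assert (Hx' : in01 xm) by exact Hxm.
  exists (ext f xm). split. { rewrite ext_id by exact Hx'. apply Hp, Hx'. }
  intros x Hx. specialize (Hm x Hx). rewrite (ext_id f x) in Hm; auto.
Qed.

Definition P (f : R -> R) (x : R) : R := RInt (ext f) 0 x.

Lemma P_der f : cont01 f -> forall x, derivable_pt_lim (P f) x (ext f x).
Proof.
  intros H x. apply is_derive_Reals. unfold P.
  apply (is_derive_RInt (ext f) (fun b => RInt (ext f) 0 b) 0 x).
  - apply filter_forall. intros b. apply (@RInt_correct R_CompleteNormedModule).
    apply ex_RInt_continuous. intros z _. apply continuity_pt_filterlim.
    apply ext_cont; auto.
  - apply continuity_pt_filterlim. apply ext_cont; auto.
Qed.

Lemma P_cont f : cont01 f -> forall x, continuity_pt (P f) x.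
Proof.
  intros H x. apply derivable_continuous_pt. exists (ext f x). apply P_der; auto.
Qed.

Lemma P_0 f : P f 0 = 0.
Proof. unfold P. rewrite RInt_point. reflexivity. Qed.

Lemma P_mono f : cont01 f -> pos01 f -> forall x y, 0 <= x <= y -> y <= 1 -> P f x <= P f y.
Proof.
  intros H Hp x y Hxy Hy. apply (mono (P f) (ext f)); try lra.
  - intros; apply P_cont; auto.
  - intros; apply P_der; auto.
  - intros c Hc. rewrite ext_id by (unfold in01; lra). left; apply Hp; unfold in01; lra.
Qed.

Lemma P_Riemann f : cont01 f -> exists pr : Riemann_integrable f 0 1, RiemannInt pr = P f 1.
Proof.
  intros H.
  assert (pr : Riemann_integrable f 0 1).
  { apply (Riemann_integrable_ext (ext f)).
    - intros x Hx. rewrite Rmin_left in Hx by lra. rewrite Rmax_right in Hx by lra.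
      apply ext_id. exact Hx.
    - apply continuity_implies_RiemannInt. lra. intros; apply ext_cont; auto. }
  exists pr. rewrite <- RInt_Reals. unfold P. apply RInt_ext.
  intros x Hx. rewrite Rmin_left in Hx by lra. rewrite Rmax_right in Hx by lra.
  symmetry; apply ext_id. unfold in01; lra.
Qed.

Lemma dplus f g x a b : derivable_pt_lim f x a -> derivable_pt_lim g x b ->
  derivable_pt_lim (fun y => f y + g y) x (a + b).
Proof. intros; apply (derivable_pt_lim_plus f g); auto. Qed.
Lemma dminus f g x a b : derivable_pt_lim f x a -> derivable_pt_lim g x b ->
  derivable_pt_lim (fun y => f y - g y) x (a - b).
Proof. intros; apply (derivable_pt_lim_minus f g); auto. Qed.
Lemma dmult f g x a b : derivable_pt_lim f x a -> derivable_pt_lim g x b ->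
  derivable_pt_lim (fun y => f y * g y) x (a * g x + f x * b).
Proof. intros; apply (derivable_pt_lim_mult f g); auto. Qed.
Lemma dscal c f x a : derivable_pt_lim f x a ->
  derivable_pt_lim (fun y => c * f y) x (c * a).
Proof. intros; apply (derivable_pt_lim_scal f c); auto. Qed.
Lemma did x : derivable_pt_lim (fun y => y) x 1.
Proof. apply derivable_pt_lim_id. Qed.
Lemma dconst c x : derivable_pt_lim (fun _ => c) x 0.
Proof. apply derivable_pt_lim_const. Qed.
Lemma deq f x a b : derivable_pt_lim f x a -> a = b -> derivable_pt_lim f x b.
Proof. intros H ->; auto. Qed.

Lemma cplus f g x : continuity_pt f x -> continuity_pt g x -> continuity_pt (fun y => f y + g y) x.
Proof. intros; apply (continuity_pt_plus f g); auto. Qed.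
Lemma cminus f g x : continuity_pt f x -> continuity_pt g x -> continuity_pt (fun y => f y - g y) x.
Proof. intros; apply (continuity_pt_minus f g); auto. Qed.
Lemma cmult f g x : continuity_pt f x -> continuity_pt g x -> continuity_pt (fun y => f y * g y) x.
Proof. intros; apply (continuity_pt_mult f g); auto. Qed.
Lemma cscal c f x : continuity_pt f x -> continuity_pt (fun y => c * f y) x.
Proof. intros; apply (continuity_pt_scal f c); auto. Qed.
Lemma cid x : continuity_pt (fun y => y) x.
Proof. apply continuity_pt_id. Qed.
Lemma cconst c x : continuity_pt (fun _ => c) x.
Proof. apply continuity_pt_const. unfold constant; auto. Qed.

Lemma cont01_minus f g : cont01 f -> cont01 g -> cont01 (fun x => f x - g x).
Proof.
  intros Hf Hg. apply eps_cont01. intros x Hx eps He.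
  destruct (cont01_eps f Hf x Hx (eps/2)) as [d1 [H1 H1']]; [lra|].
  destruct (cont01_eps g Hg x Hx (eps/2)) as [d2 [H2 H2']]; [lra|].
  exists (Rmin d1 d2). split. apply Rmin_pos; auto.
  intros y Hy Hyx. assert (A := H1' y Hy (Rlt_le_trans _ _ _ Hyx (Rmin_l _ _))).
  assert (B := H2' y Hy (Rlt_le_trans _ _ _ Hyx (Rmin_r _ _))).
  unfold Rabs in *. repeat destruct Rcase_abs; lra.
Qed.

Lemma ext_der01 f f1 : (forall x, 0 < x < 1 -> derivable_pt_lim f x (f1 x)) ->
  forall x, 0 < x < 1 -> derivable_pt_lim (ext f) x (f1 x).
Proof. intros; apply ext_deriv; auto. Qed.

Ltac ctac := repeat match goal with
  | |- continuity_pt (fun y => @?A y + @?B y) _ => apply (cplus A B)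
  | |- continuity_pt (fun y => @?A y - @?B y) _ => apply (cminus A B)
  | |- continuity_pt (fun y => @?A y * @?B y) _ => apply (cmult A B)
  | |- continuity_pt (fun y => y) _ => apply cid
  | |- continuity_pt (fun _ => ?c) _ => apply cconst
  end.
Ltac dtac := repeat match goal with
  | |- derivable_pt_lim (fun y => @?A y + @?B y) _ _ => apply (dplus A B)
  | |- derivable_pt_lim (fun y => @?A y - @?B y) _ _ => apply (dminus A B)
  | |- derivable_pt_lim (fun y => @?A y * @?B y) _ _ => apply (dmult A B)
  | |- derivable_pt_lim (fun y => y) _ _ => apply did
  | |- derivable_pt_lim (fun _ => ?c) _ _ => apply dconst
  end.

Ltac leaf := first
  [ apply ext_cont; assumption
  | apply P_cont; assumption
  | apply P_der; assumption
  | apply ext_deriv; [assumption| match goal with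
      H : forall x, 0 < x < 1 -> derivable_pt_lim ?f x _ |- derivable_pt_lim ?f _ _ =>
        apply H; assumption end] ].

Section Est.
Variables (Lam beta gamma mu : R -> R) (dS dI : R) (S I : R -> R).
Variables (Lm LM bm bM gm gM mm : R).
Hypothesis HdS : 0 < dS.
Hypothesis HdI : 0 < dI.
Hypothesis Hsol : pos_sol_E dS dI Lam beta gamma mu S I.
Hypothesis HL : forall x, in01 x -> Lm <= Lam x <= LM.
Hypothesis Hb : forall x, in01 x -> bm <= beta x <= bM.
Hypothesis Hg : forall x, in01 x -> gm <= gamma x <= gM.
Hypothesis Hm : forall x, in01 x -> mm <= mu x.
Hypothesis Hpos : 0 < Lm /\ 0 < bm /\ 0 < gm /\ 0 < mm.

Lemma S_lower : forall x, in01 x -> Rmin Lm (gm / bM) <= S x.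
Proof.
  destruct Hsol as [HS [HI [S1 [S2 [I1 [I2 [HnS [HnI [ES EI]]]]]]]]].
  apply (minprin S S1 S2); auto.
  intros x Hx Hlt. assert (Hx' : in01 x) by (unfold in01; lra).
  specialize (ES x Hx). specialize (HL x Hx'). specialize (Hb x Hx').
  specialize (Hg x Hx'). specialize (HS x Hx'). specialize (HI x Hx').
  assert (S x < Lm) by (eapply Rlt_le_trans; [apply Hlt|apply Rmin_l]).
  assert (S x < gm / bM) by (eapply Rlt_le_trans; [apply Hlt|apply Rmin_r]).
  assert (HbM : 0 < bM) by lra.
  assert (bM * S x < gm).
  { apply (Rmult_lt_compat_l bM) in H0; auto. field_simplify in H0; lra. }
  assert (beta x * S x <= bM * S x) by (apply Rmult_le_compat_r; lra).
  assert (0 < (gamma x - beta x * S x) * I x) by (apply Rmult_lt_0_compat; lra).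
  nra.
Qed.

Lemma S_upper : forall x, in01 x -> S x <= Rmax LM (gM / bm).
Proof.
  destruct Hsol as [HS [HI [S1 [S2 [I1 [I2 [HnS [HnI [ES EI]]]]]]]]].
  apply (maxprin S S1 S2); auto.
  intros x Hx Hlt. assert (Hx' : in01 x) by (unfold in01; lra).
  specialize (ES x Hx). specialize (HL x Hx'). specialize (Hb x Hx').
  specialize (Hg x Hx'). specialize (HS x Hx'). specialize (HI x Hx').
  assert (S x > LM) by (eapply Rle_lt_trans; [apply Rmax_l|apply Hlt]).
  assert (S x > gM / bm) by (eapply Rle_lt_trans; [apply Rmax_r|apply Hlt]).
  destruct Hpos as [_ [Hbm _]].
  assert (bm * S x > gM).
  { apply (Rmult_lt_compat_l bm) in H0; auto. field_simplify in H0; lra. }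
  assert (beta x * S x >= bm * S x) by (apply Rle_ge, Rmult_le_compat_r; lra).
  assert (0 < (beta x * S x - gamma x) * I x) by (apply Rmult_lt_0_compat; lra).
  nra.
Qed.

Lemma I_int_bound : P I 1 <= LM / mm.
Proof.
  destruct Hsol as [HS [HI [S1 [S2 [I1 [I2 [HnS [HnI [ES EI]]]]]]]]].
  destruct HnS as [cS [cS1 [dS0 [dS1 [S10 S11]]]]].
  destruct HnI as [cI [cI1 [dI0 [dI1 [I10 I11]]]]].
  set (Q := fun x => dS * ext S1 x + dI * ext I1 x + LM * x - mm * P I x).
  assert (Hq : Q 0 <= Q 1).
  { apply (mono Q (fun x => dS * S2 x + dI * I2 x + LM - mm * I x)). lra.
    - intros c _. unfold Q. ctac.
      all: try leaf.
    - intros c Hc. unfold Q. eapply deq. dtac.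
      all: try leaf.
      rewrite ?(ext_id _ c) by (unfold in01; lra). ring.
    - intros c Hc. assert (Hx' : in01 c) by (unfold in01; lra).
      specialize (ES c Hc). specialize (EI c Hc). specialize (HL c Hx').
      specialize (Hm c Hx'). specialize (HS c Hx'). specialize (HI c Hx').
      assert (0 <= (mu c - mm) * I c) by (apply Rmult_le_pos; lra).
      nra. }
  unfold Q in Hq. rewrite P_0 in Hq.
  rewrite !ext_id in Hq by (unfold in01; lra).
  rewrite S10, S11, I10, I11 in Hq.
  destruct Hpos as [_ [_ [_ Hmm]]].
  apply (Rmult_le_reg_r mm); auto. field_simplify; lra.
Qed.


Lemma PI_bounds : forall x, in01 x -> 0 <= P I x <= P I 1.
Proof.
  destruct Hsol as [HS [HI [S1 [S2 [I1 [I2 [HnS [HnI [ES EI]]]]]]]]].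
  destruct HnI as [cI _]. intros x Hx. unfold in01 in Hx. split.
  - rewrite <- (P_0 I). apply P_mono; auto; lra.
  - apply P_mono; auto; lra.
Qed.

Definition Lip := (LM + gM * (LM / mm)) / dS.

Lemma S_lip : forall x y, in01 x -> in01 y -> Rabs (S x - S y) <= Lip * Rabs (x - y).
Proof.
  assert (HJ := I_int_bound). assert (HPb := PI_bounds).
  destruct Hsol as [HS [HI [S1 [S2 [I1 [I2 [HnS [HnI [ES EI]]]]]]]]].
  destruct HnS as [cS [cS1 [dS0 [dS1 [S10 S11]]]]].
  destruct HnI as [cI [cI1 [dI0 [dI1 [I10 I11]]]]].
  destruct Hpos as [HLm [Hbm [Hgm Hmm]]].
  assert (HgM : 0 <= gM) by (destruct (Hg 0) as [A B]; [unfold in01; lra|lra]).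
  assert (HLM : 0 < LM) by (destruct (HL 0) as [A B]; [unfold in01; lra|lra]).
  set (Q := fun x => dS * ext S1 x + LM * x + gM * P I x).
  assert (Hq : forall a b, 0 <= a <= b -> b <= 1 -> Q a <= Q b).
  { intros a b Hab Hb1.
    apply (mono Q (fun x => dS * S2 x + LM + gM * I x)). lra.
    - intros c _. unfold Q. ctac. all: try leaf.
    - intros c Hc0. assert (Hc : 0 < c < 1) by lra. unfold Q. eapply deq. dtac. all: try leaf.
      rewrite ?(ext_id _ c) by (unfold in01; lra). ring.
    - intros c Hc. assert (Hx' : in01 c) by (unfold in01; lra).
      specialize (ES c ltac:(lra)). specialize (HL c Hx'). specialize (Hb c Hx').
      specialize (Hg c Hx'). specialize (HS c Hx'). specialize (HI c Hx').
      assert (0 <= (gM - gamma c) * I c) by (apply Rmult_le_pos; lra).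
      assert (0 <= beta c * S c * I c) by (repeat apply Rmult_le_pos; lra).
      nra. }
  assert (Hb1 : forall x, in01 x -> Rabs (S1 x) <= Lip).
  { intros x Hx. pose proof (Hq 0 x ltac:(unfold in01 in Hx; lra) ltac:(unfold in01 in Hx; lra)) as A.
    pose proof (Hq x 1 ltac:(unfold in01 in Hx; lra) ltac:(lra)) as B.
    unfold Q in A, B. rewrite P_0 in A. rewrite !ext_id in A, B by (unfold in01 in *; lra).
    rewrite S10 in A. rewrite S11 in B. specialize (HPb x Hx).
    assert (gM * P I x <= gM * (LM / mm)) by (apply Rmult_le_compat_l; lra).
    assert (gM * P I 1 <= gM * (LM / mm)) by (apply Rmult_le_compat_l; lra).
    assert (0 <= gM * P I x) by (apply Rmult_le_pos; lra).
    unfold Lip. apply Rabs_le. split.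
    - apply (Rmult_le_reg_l dS); auto.
      replace (dS * - ((LM + gM * (LM / mm)) / dS)) with (-(LM + gM*(LM/mm))) by (field; lra).
      unfold in01 in Hx. nra.
    - apply (Rmult_le_reg_l dS); auto.
      replace (dS * ((LM + gM * (LM / mm)) / dS)) with ((LM + gM*(LM/mm))) by (field; lra).
      unfold in01 in Hx. nra. }
  assert (Hone : forall x y, in01 x -> in01 y -> x < y -> Rabs (S x - S y) <= Lip * Rabs (x - y)).
  { intros x y Hx Hy Hxy. destruct (MV (ext S) S1 x y) as [c [Hc E]]; auto.
    - intros; leaf.
    - intros c Hc. apply ext_deriv. unfold in01 in *; lra. apply dS0. unfold in01 in *; lra.
    - rewrite !ext_id in E by auto.
      replace (S x - S y) with (- (S1 c * (y - x))) by lra. rewrite Rabs_Ropp, Rabs_mult.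
      rewrite (Rabs_minus_sym x y). apply Rmult_le_compat_r. apply Rabs_pos.
      apply Hb1. unfold in01 in *; lra. }
  intros x y Hx Hy. destruct (Rtotal_order x y) as [H|[H|H]].
  - auto.
  - rewrite H. replace (y - y) with 0 by ring. replace (S y - S y) with 0 by ring.
    rewrite Rabs_R0. lra.
  - rewrite Rabs_minus_sym, (Rabs_minus_sym x). auto.
Qed.

End Est.

Lemma cont_pt_eps f x : continuity_pt f x -> forall eps, 0 < eps -> exists d, 0 < d /\
  forall y, Rabs (y - x) < d -> Rabs (f y - f x) < eps.
Proof.
  intros H eps He. destruct (H eps He) as [d [Hd Hd']]. exists d; split; auto.
  intros y Hy. destruct (Req_dec x y) as [->|Hne].
  { replace (f y - f y) with 0 by ring. rewrite Rabs_R0; lra. }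
  apply (Hd' y). split. split; [exact I|auto]. exact Hy.
Qed.

Lemma barrier f a b dl : a <= b -> (forall x, a <= x <= b -> continuity_pt f x) -> 0 < dl ->
  f a >= dl ->
  (forall x, a <= x <= b -> (forall y, a <= y <= x -> f y > 0) -> f x >= dl) ->
  forall x, a <= x <= b -> f x >= dl.
Proof.
  intros Hab Hc Hd Ha H.
  set (E := fun y => a <= y <= b /\ forall z, a <= z <= y -> f z > 0).
  assert (HEa : E a). { split. lra. intros z Hz. replace z with a by lra. lra. }
  assert (HEb : bound E). { exists b. intros y [Hy _]. lra. }
  destruct (completeness E HEb (ex_intro _ a HEa)) as [s [Hub Hlub]].
  assert (Has : a <= s) by (apply Hub; auto).
  assert (Hsb : s <= b) by (apply Hlub; intros y [Hy _]; lra).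
  assert (C1 : forall z, a <= z < s -> f z >= dl).
  { intros z Hz.
    assert (Hex : exists y, E y /\ z < y).
    { apply NNPP. intro Hn. assert (s <= z).
      { apply Hlub. intros y Hy. apply Rnot_lt_le. intro Hl. apply Hn. exists y; auto. }
      lra. }
    destruct Hex as [y [[Hy1 Hy2] Hzy]]. apply H. lra. intros w Hw. apply Hy2. lra. }
  assert (C2 : f s >= dl).
  { destruct (Req_dec s a) as [->|Hne]; auto.
    apply Rnot_lt_ge. intro Hlt.
    destruct (cont_pt_eps f s (Hc s ltac:(lra)) (dl - f s)) as [d [Hd0 Hd1]]. lra.
    set (z := Rmax a (s - d/2)).
    assert (a <= z < s) by (unfold z; unfold Rmax; destruct Rle_dec; lra).
    assert (Rabs (z - s) < d) by (unfold z, Rmax; destruct Rle_dec; unfold Rabs; destruct Rcase_abs; lra).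
    specialize (Hd1 z H1). specialize (C1 z H0).
    unfold Rabs in Hd1; destruct Rcase_abs in Hd1; lra. }
  assert (C3 : s = b).
  { destruct (Req_dec s b); auto. exfalso.
    destruct (cont_pt_eps f s (Hc s ltac:(lra)) (dl/2)) as [d [Hd0 Hd1]]. lra.
    set (y := Rmin b (s + d/2)).
    assert (s < y <= b) by (unfold y, Rmin; destruct Rle_dec; lra).
    assert (E y).
    { split. lra. intros z Hz. destruct (Rlt_le_dec z s).
      - specialize (C1 z ltac:(lra)). lra.
      - assert (Rabs (z - s) < d) by (unfold y, Rmin in Hz; destruct Rle_dec in Hz;
           unfold Rabs; destruct Rcase_abs; lra).
        specialize (Hd1 z H2). unfold Rabs in Hd1; destruct Rcase_abs in Hd1; lra. }
    specialize (Hub y H2). lra. }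
  intros x Hx. destruct (Rlt_le_dec x s). apply C1; lra. replace x with s by lra. auto.
Qed.

Lemma barrier_left f a b dl : a <= b -> (forall x, a <= x <= b -> continuity_pt f x) -> 0 < dl ->
  f b >= dl ->
  (forall x, a <= x <= b -> (forall y, x <= y <= b -> f y > 0) -> f x >= dl) ->
  forall x, a <= x <= b -> f x >= dl.
Proof.
  intros Hab Hc Hd Hb H x Hx.
  set (g := fun t => f (- t)).
  assert (Hg : forall t, -b <= t <= -a -> g t >= dl).
  { apply barrier; try lra.
    - intros t Ht. unfold g.
      apply (continuity_pt_comp (fun t => - t) f). apply continuity_pt_opp, continuity_pt_id.
      apply Hc. lra.
    - unfold g. rewrite Ropp_involutive. auto.
    - intros t Ht Hy. unfold g. apply H. lra. intros y Hy'. specialize (Hy (- y) ltac:(lra)).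
      unfold g in Hy. rewrite Ropp_involutive in Hy. auto. }
  specialize (Hg (- x) ltac:(lra)). unfold g in Hg. rewrite Ropp_involutive in Hg. auto.
Qed.

Lemma deriv_zero_max g x l : 0 < x < 1 -> derivable_pt_lim g x l ->
  (forall y, 0 < y < 1 -> g y <= g x) -> l = 0.
Proof.
  intros Hx Hd Hm.
  assert (pr : derivable_pt g x) by (exists l; auto).
  rewrite <- (derive_pt_eq_0 g x l pr Hd).
  apply (deriv_maximum g 0 1 x pr); try lra. intros; apply Hm; lra.
Qed.

Section StepA.
Variables (Lam beta gamma mu : R -> R) (dS dI : R) (S I St : R -> R).
Variables (Lm LM bm bM gm gM mm : R).
Hypothesis HdS : 0 < dS.
Hypothesis HdI : 0 < dI.
Hypothesis Hsol : pos_sol_E dS dI Lam beta gamma mu S I.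
Hypothesis HSt : is_Stilde dS Lam St.
Hypothesis HL : forall x, in01 x -> Lm <= Lam x <= LM.
Hypothesis Hb : forall x, in01 x -> bm <= beta x <= bM.
Hypothesis Hg : forall x, in01 x -> gm <= gamma x <= gM.
Hypothesis Hm : forall x, in01 x -> mm <= mu x.
Hypothesis Hpos : 0 < Lm /\ 0 < bm /\ 0 < gm /\ 0 < mm.

Lemma stepA : forall x, in01 x ->
  St x - S x <= (2 + dS) * (bM * Rmax LM (gM / bm) * P I 1 / dS).
Proof.
  assert (Hup : forall x, in01 x -> S x <= Rmax LM (gM / bm)) by exact (S_upper Lam beta gamma mu dS dI S I Lm LM bm bM gm gM mm HdS Hsol HL Hb Hg Hpos).
  assert (HPb : forall x, in01 x -> 0 <= P I x <= P I 1) by exact (PI_bounds Lam beta gamma mu dS dI S I Hsol).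
  set (Cup := Rmax LM (gM / bm)) in *.
  set (Kc := bM * Cup). set (J := P I 1).
  destruct Hsol as [HS [HI [S1 [S2 [I1 [I2 [HnS [HnI [ES EI]]]]]]]]].
  destruct HnS as [cS [cS1 [dS0 [dS1 [S10 S11]]]]].
  destruct HnI as [cI [cI1 [dI0 [dI1 [I10 I11]]]]].
  destruct HSt as [HSt0 [T1 [T2 [[cT [cT1 [dT0 [dT1 [T10 T11]]]]] ET]]]].
  destruct Hpos as [HLm [Hbm [Hgm Hmm]]].
  assert (HbM : 0 < bM) by (destruct (Hb 0) as [A B]; [unfold in01; lra|lra]).
  assert (HCup : 0 <= Cup) by (unfold Cup; eapply Rle_trans; [|apply Rmax_l]; destruct (HL 0); [unfold in01; lra|lra]).
  assert (HKc : 0 <= Kc) by (unfold Kc; apply Rmult_le_pos; lra).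
  assert (HJ : 0 <= J) by (unfold J; destruct (HPb 1); [unfold in01; lra|lra]).
  set (w := fun x => St x - S x). set (w1 := fun x => T1 x - S1 x).
  set (w2 := fun x => T2 x - S2 x).
  assert (cw : cont01 w) by (apply cont01_minus; auto).
  assert (cw1 : cont01 w1) by (apply cont01_minus; auto).
  assert (dw0 : forall x, 0 < x < 1 -> derivable_pt_lim w x (w1 x))
    by (intros; apply dminus; auto).
  assert (dw1 : forall x, 0 < x < 1 -> derivable_pt_lim w1 x (w2 x))
    by (intros; apply dminus; auto).
  assert (w10 : w1 0 = 0) by (unfold w1; rewrite T10, S10; ring).
  assert (w11 : w1 1 = 0) by (unfold w1; rewrite T11, S11; ring).
  assert (Hgle : forall x, in01 x -> (beta x * S x - gamma x) * I x <= Kc * I x).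
  { intros x Hx. specialize (HI x Hx). specialize (Hup x Hx). specialize (HS x Hx).
    destruct (Hb x Hx). destruct (Hg x Hx).
    apply Rmult_le_compat_r. lra. unfold Kc.
    assert (beta x * S x <= bM * Cup) by (apply Rmult_le_compat; lra). lra. }
  assert (Ew : forall x, 0 < x < 1 -> dS * w2 x = w x - (beta x * S x - gamma x) * I x).
  { intros x Hx. specialize (ES x Hx). specialize (ET x Hx). unfold w, w2. lra. }
  set (eta := Kc * J / dS).
  assert (Heta : 0 <= eta) by (unfold eta; apply Rmult_le_pos; [apply Rmult_le_pos; lra|
     left; apply Rinv_0_lt_compat; lra]).
  cut (forall x, in01 x -> w x <= eta * (2 + dS)).
  { intros Hc x Hx. specialize (Hc x Hx). unfold w in Hc. unfold eta in Hc.
    unfold eta. lra. }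
  destruct (continuity_ab_maj (ext w) 0 1) as [a [Hmax Ha]]; [lra| intros; leaf |].
  assert (Ha' : in01 a) by exact Ha.
  rewrite ext_id in Hmax by exact Ha'.
  set (M := w a) in *.
  assert (HM : forall x, in01 x -> w x <= M).
  { intros x Hx. specialize (Hmax x Hx). rewrite ext_id in Hmax; auto. }
  destruct (Rle_lt_dec M (2 * eta)) as [Hsmall|Hbig].
  { intros x Hx. specialize (HM x Hx). nra. }
  assert (Hw1a : w1 a = 0).
  { destruct (Req_dec a 0) as [->|H0]; auto. destruct (Req_dec a 1) as [->|H1]; auto.
    assert (Hai : 0 < a < 1) by (unfold in01 in Ha'; lra).
    apply (deriv_zero_max (ext w) a); auto.
    - apply ext_deriv; auto.
    - intros y Hy. rewrite !ext_id by (unfold in01; lra). apply HM. unfold in01; lra. }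
  set (h := fun t => ext w1 t + (Kc / dS) * P I t).
  assert (Hh : forall u v, 0 <= u <= v -> v <= 1 -> (forall y, u < y < v -> w y > 0) -> h u <= h v).
  { intros u v Huv Hv1 Hpw. apply (mono h (fun t => w2 t + (Kc/dS) * I t)). lra.
    - intros c _. unfold h. ctac. all: try leaf.
    - intros c Hc0. assert (Hc : 0 < c < 1) by lra. unfold h. eapply deq. dtac. all: try leaf.
      rewrite ?(ext_id _ c) by (unfold in01; lra). ring.
    - intros c Hc0. assert (Hc : 0 < c < 1) by lra. assert (Hc' : in01 c) by (unfold in01; lra).
      specialize (Ew c Hc). specialize (Hgle c Hc'). specialize (Hpw c Hc0).
      assert (w2 c = (w c - (beta c * S c - gamma c) * I c) / dS) by (rewrite <- Ew; field; lra).
      rewrite H. 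
      replace ((w c - (beta c * S c - gamma c) * I c) / dS + Kc / dS * I c) with
        ((w c - (beta c * S c - gamma c) * I c + Kc * I c) / dS) by (field; lra).
      apply Rmult_le_pos. lra. left; apply Rinv_0_lt_compat; lra. }
  assert (HPdiff : forall u v, in01 u -> in01 v -> (Kc / dS) * (P I v - P I u) <= eta).
  { intros u v Hu Hv. unfold eta. destruct (HPb u Hu). destruct (HPb v Hv).
    replace (Kc * J / dS) with ((Kc / dS) * J) by (field; lra).
    apply Rmult_le_compat_l. apply Rmult_le_pos; [lra| left; apply Rinv_0_lt_compat; lra].
    unfold J; lra. }
  assert (Hdl : 0 < M - eta) by lra.
  assert (Hright : forall x, a <= x <= 1 -> ext w x >= M - eta).
  { apply barrier. unfold in01 in Ha'; lra. intros; leaf. auto.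
    rewrite ext_id; auto. unfold M; lra.
    intros x Hx Hpos'. destruct (Req_dec x a) as [->|Hxa].
    { rewrite ext_id; auto. unfold M; lra. }
    assert (Hx' : in01 x) by (unfold in01 in *; lra).
    assert (Hw1 : forall t, a <= t <= x -> w1 t >= - eta).
    { intros t Ht. assert (Ht' : in01 t) by (unfold in01 in *; lra).
      assert (A := Hh a t ltac:(unfold in01 in *; lra) ltac:(unfold in01 in *; lra)).
      assert (A' : h a <= h t).
      { apply A. intros y Hy. specialize (Hpos' y ltac:(lra)).
        rewrite ext_id in Hpos' by (unfold in01 in *; lra). auto. }
      unfold h in A'. rewrite !ext_id in A' by auto. rewrite Hw1a in A'.
      specialize (HPdiff a t Ha' Ht'). lra. }
    assert (Hq : ext w a + eta * a <= ext w x + eta * x).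
    { apply (mono (fun t => ext w t + eta * t) (fun t => w1 t + eta * 1)). lra.
      - intros c _. ctac. all: try leaf.
      - intros c Hc. dtac.
        + apply ext_deriv; [unfold in01 in *; lra| apply dw0; unfold in01 in *; lra].
        + apply (dscal eta (fun t => t)), did.
      - intros c Hc. specialize (Hw1 c ltac:(lra)). lra. }
    rewrite !ext_id in Hq by auto. rewrite ext_id by auto. unfold M. unfold in01 in *. nra. }
  assert (Hleft : forall x, 0 <= x <= a -> ext w x >= M - eta).
  { apply barrier_left. unfold in01 in Ha'; lra. intros; leaf. auto.
    rewrite ext_id; auto. unfold M; lra.
    intros x Hx Hpos'. destruct (Req_dec x a) as [->|Hxa].
    { rewrite ext_id; auto. unfold M; lra. }
    assert (Hx' : in01 x) by (unfold in01 in *; lra).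
    assert (Hw1 : forall t, x <= t <= a -> w1 t <= eta).
    { intros t Ht. assert (Ht' : in01 t) by (unfold in01 in *; lra).
      assert (A := Hh t a ltac:(unfold in01 in *; lra) ltac:(unfold in01 in *; lra)).
      assert (A' : h t <= h a).
      { apply A. intros y Hy. specialize (Hpos' y ltac:(lra)).
        rewrite ext_id in Hpos' by (unfold in01 in *; lra). auto. }
      unfold h in A'. rewrite !ext_id in A' by auto. rewrite Hw1a in A'.
      specialize (HPdiff t a Ht' Ha'). lra. }
    assert (Hq : eta * x - ext w x <= eta * a - ext w a).
    { apply (mono (fun t => eta * t - ext w t) (fun t => eta * 1 - w1 t)). lra.
      - intros c _. ctac. all: try leaf.
      - intros c Hc. dtac.
        + apply (dscal eta (fun t => t)), did.
        + apply ext_deriv; [unfold in01 in *; lra| apply dw0; unfold in01 in *; lra].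
      - intros c Hc. specialize (Hw1 c ltac:(lra)). lra. }
    rewrite !ext_id in Hq by auto. rewrite ext_id by auto. unfold M. unfold in01 in *. nra. }
  assert (Hall : forall x, in01 x -> w x >= M - eta).
  { intros x Hx. rewrite <- (ext_id w x Hx). destruct (Rle_lt_dec x a).
    apply Hleft; unfold in01 in *; lra. apply Hright; unfold in01 in *; lra. }
  set (Q := fun t => dS * ext w1 t - (M - eta) * t + Kc * P I t).
  assert (HQ : Q 0 <= Q 1).
  { apply (mono Q (fun t => dS * w2 t - (M - eta) * 1 + Kc * I t)). lra.
    - intros c _. unfold Q. ctac. all: try leaf.
    - intros c Hc. unfold Q. eapply deq. dtac. all: try leaf.
      rewrite ?(ext_id _ c) by (unfold in01; lra). ring.
    - intros c Hc. assert (Hc' : in01 c) by (unfold in01; lra).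
      rewrite Ew by auto. specialize (Hall c Hc'). specialize (Hgle c Hc'). lra. }
  unfold Q in HQ. rewrite P_0 in HQ. rewrite !ext_id in HQ by (unfold in01; lra).
  rewrite w10, w11 in HQ. fold J in HQ.
  assert (Kc * J = eta * dS) by (unfold eta; field; lra).
  intros x Hx. specialize (HM x Hx). nra.
Qed.

End StepA.

Lemma dsin om p t : derivable_pt_lim (fun t => sin (om * (t - p))) t (om * cos (om * (t - p))).
Proof. apply is_derive_Reals. auto_derive. auto. replace (om * (t + - p)) with (om * (t - p)) by ring. ring. Qed.
Lemma dcos om p t : derivable_pt_lim (fun t => cos (om * (t - p))) t (- om * sin (om * (t - p))).
Proof. apply is_derive_Reals. auto_derive. auto. replace (om * (t + - p)) with (om * (t - p)) by ring. ring. Qed.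

Lemma sturm (I I1 I2 : R -> R) p q dI dl : p < q -> 0 < dI -> 0 < dl ->
  (PI / (q - p)) ^ 2 * dI <= dl ->
  (forall x, p <= x <= q -> continuity_pt I x) ->
  (forall x, p <= x <= q -> continuity_pt I1 x) ->
  (forall x, p < x < q -> derivable_pt_lim I x (I1 x)) ->
  (forall x, p < x < q -> derivable_pt_lim I1 x (I2 x)) ->
  (forall x, p <= x <= q -> 0 < I x) ->
  (forall x, p < x < q -> dI * I2 x <= - dl * I x) -> False.
Proof.
  intros Hpq HdI Hdl Hom cI cI1 dI0 dI1 Ipos EI.
  set (om := PI / (q - p)).
  assert (Hom0 : 0 < om) by (unfold om; apply Rdiv_lt_0_compat; [apply PI_RGT_0|lra]).
  set (V := fun t => om * I t * cos (om * (t - p)) - I1 t * sin (om * (t - p))).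
  assert (HV : V p <= V q).
  { apply (mono V (fun t => - (I2 t + om ^ 2 * I t) * sin (om * (t - p)))). lra.
    - intros c Hc. unfold V.
      apply (cminus (fun t => om * I t * cos (om * (t - p))) (fun t => I1 t * sin (om * (t - p)))).
      + apply (cmult (fun t => om * I t) (fun t => cos (om * (t - p)))).
        apply (cscal om I). auto. apply derivable_continuous_pt. eexists. apply dcos.
      + apply (cmult I1 (fun t => sin (om * (t - p)))). auto.
        apply derivable_continuous_pt. eexists. apply dsin.
    - intros c Hc. unfold V. eapply deq.
      apply (dminus (fun t => om * I t * cos (om * (t - p))) (fun t => I1 t * sin (om * (t - p)))).
      + apply (dmult (fun t => om * I t) (fun t => cos (om * (t - p)))).
        apply (dscal om I). auto. apply dcos.
      + apply (dmult I1 (fun t => sin (om * (t - p)))). auto. apply dsin.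
      + simpl. ring.
    - intros c Hc. assert (Hs : 0 < sin (om * (c - p))).
      { apply sin_gt_0. apply Rmult_lt_0_compat; lra.
        unfold om. replace (PI / (q - p) * (c - p)) with (PI * ((c - p) / (q - p))) by (field; lra).
        assert ((c - p) / (q - p) < 1) by (apply (Rmult_lt_reg_r (q - p)); [lra|]; field_simplify; lra).
        pose proof PI_RGT_0. nra. }
      specialize (EI c Hc). assert (HIc : 0 < I c) by (apply Ipos; lra).
      fold om in Hom.
      assert (om ^ 2 * dI * I c <= dl * I c) by (apply Rmult_le_compat_r; lra).
      assert (I2 c + om ^ 2 * I c <= 0).
      { apply (Rmult_le_reg_l dI). lra. nra. }
      nra. }
  unfold V in HV. replace (p - p) with 0 in HV by ring.
  replace (om * (q - p)) with PI in HV by (unfold om; field; lra).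
  rewrite Rmult_0_r, sin_0, cos_0, sin_PI, cos_PI in HV.
  assert (0 < I p) by (apply Ipos; lra). assert (0 < I q) by (apply Ipos; lra).
  nra.
Qed.

Definition inf (Pn : nat -> Prop) := forall N, exists n, (N <= n)%nat /\ Pn n.

Lemma pigeon1 : forall B Pn (b : nat -> nat), inf Pn -> (forall n, Pn n -> (b n <= B)%nat) ->
  exists k, inf (fun n => Pn n /\ b n = k).
Proof.
  induction B as [|B IH]; intros Pn b Hinf Hb.
  - exists 0%nat. intros N. destruct (Hinf N) as [n [Hn HP]]. exists n.
    specialize (Hb n HP). repeat split; auto. lia.
  - destruct (classic (inf (fun n => Pn n /\ b n = S B))) as [H|H].
    + exists (S B); auto.
    + unfold inf in H. apply not_all_ex_not in H. destruct H as [N0 HN0].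
      destruct (IH (fun n => Pn n /\ (N0 <= n)%nat) b) as [k Hk].
      * intros N. destruct (Hinf (max N N0)) as [n [Hn HP]]. exists n.
        split; [lia|split; auto; lia].
      * intros n [HP Hn]. specialize (Hb n HP).
        assert (b n <> S B). { intro E. apply HN0. exists n. auto. } lia.
      * exists k. intros N. destruct (Hk N) as [n [Hn [[HP _] E]]]. exists n. auto.
Qed.

Lemma pigeonL : forall (bs : list (nat -> nat)) B Pn, inf Pn ->
  (forall b, List.In b bs -> forall n, Pn n -> (b n <= B)%nat) ->
  exists Q, inf Q /\ (forall n, Q n -> Pn n) /\
    (forall b, List.In b bs -> forall n m, Q n -> Q m -> b n = b m).
Proof.
  induction bs as [|b bs IH]; intros B Pn Hinf Hb.
  - exists Pn. repeat split; auto. intros b [].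
  - destruct (pigeon1 B Pn b Hinf) as [k Hk].
    { intros n Hn. apply Hb; auto. left; auto. }
    destruct (IH B _ Hk) as [Q [HQ1 [HQ2 HQ3]]].
    { intros b' Hb' n [Hn _]. apply Hb; auto. right; auto. }
    exists Q. split; auto. split. { intros n Hn. apply HQ2; auto. }
    intros b' [<-|Hb'] n m Hn Hm.
    + destruct (HQ2 n Hn) as [_ E1]. destruct (HQ2 m Hm) as [_ E2]. congruence.
    + apply HQ3; auto.
Qed.

Definition bin (h y : R) : nat := Z.to_nat (up (y / h)).

Lemma up_pos r : 0 <= r -> (0 <= up r)%Z.
Proof.
  intros H. destruct (archimed r) as [A _]. assert (0 < IZR (up r)) by lra.
  apply lt_0_IZR in H0. lia.
Qed.

Lemma bin_close h y y' : 0 < h -> 0 <= y -> 0 <= y' -> bin h y = bin h y' -> Rabs (y - y') < h.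
Proof.
  intros Hh Hy Hy' E. unfold bin in E.
  assert (Hr : 0 <= y / h) by (apply Rmult_le_pos; [lra| left; apply Rinv_0_lt_compat; lra]).
  assert (Hr' : 0 <= y' / h) by (apply Rmult_le_pos; [lra| left; apply Rinv_0_lt_compat; lra]).
  apply Z2Nat.inj in E; try (apply up_pos; auto).
  destruct (archimed (y / h)) as [A1 A2]. destruct (archimed (y' / h)) as [B1 B2].
  rewrite E in A1, A2.
  assert (Rabs (y / h - y' / h) < 1) by (unfold Rabs; destruct Rcase_abs; lra).
  replace (y - y') with (h * (y / h - y' / h)) by (field; lra).
  rewrite Rabs_mult, Rabs_pos_eq by lra. nra.
Qed.

Lemma bin_bound h y A : 0 < h -> 0 <= y <= A -> (bin h y <= Z.to_nat (up (A / h)))%nat.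
Proof.
  intros Hh Hy. unfold bin.
  assert (Hr : 0 <= y / h) by (apply Rmult_le_pos; [lra| left; apply Rinv_0_lt_compat; lra]).
  assert (Hr2 : y / h <= A / h) by (apply Rmult_le_compat_r; [left; apply Rinv_0_lt_compat|]; lra).
  apply Z2Nat.inj_le; try (apply up_pos; lra).
  destruct (archimed (y / h)) as [A1 A2]. destruct (archimed (A / h)) as [B1 B2].
  assert (IZR (up (y / h)) < IZR (up (A / h)) + 1) by lra.
  rewrite <- plus_IZR in H. apply lt_IZR in H. lia.
Qed.

Lemma INR_S_pos m : 0 < INR (S m).
Proof. apply lt_0_INR. lia. Qed.

Lemma grid m x : in01 x -> exists i, (i <= S m)%nat /\ Rabs (x - INR i / INR (S m)) <= 1 / INR (S m).
Proof.
  intros Hx. unfold in01 in Hx. pose proof (INR_S_pos m) as Hm.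
  assert (Hr : 0 <= x * INR (S m)) by nra.
  set (k := up (x * INR (S m))).
  destruct (archimed (x * INR (S m))) as [A1 A2]. fold k in A1, A2.
  assert (Hk : (1 <= k)%Z).
  { assert (0 < IZR k) by lra. apply lt_0_IZR in H. lia. }
  exists (Z.to_nat (k - 1)).
  assert (HI : INR (Z.to_nat (k - 1)) = IZR k - 1).
  { rewrite INR_IZR_INZ, Z2Nat.id by lia. rewrite minus_IZR. simpl. ring. }
  split.
  - apply INR_le. rewrite HI. assert (x * INR (S m) <= INR (S m)) by nra. lra.
  - rewrite HI. replace (x - (IZR k - 1) / INR (S m)) with ((x * INR (S m) - (IZR k - 1)) / INR (S m))
      by (field; lra).
    unfold Rdiv. rewrite Rabs_mult. rewrite (Rabs_pos_eq (/ _)) by (left; apply Rinv_0_lt_compat; lra).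
    apply Rmult_le_compat_r. left; apply Rinv_0_lt_compat; lra.
    unfold Rabs; destruct Rcase_abs; lra.
Qed.

Lemma small_eps C eps : 0 < eps -> exists m, C / INR (S m) < eps.
Proof.
  intros He. destruct (Rle_lt_dec C 0) as [HC|HC].
  - exists 0%nat. pose proof (INR_S_pos 0). assert (C / INR 1 <= 0).
    { unfold Rdiv. apply Rmult_le_0_r. lra. left; apply Rinv_0_lt_compat; lra. } lra.
  - exists (Z.to_nat (up (C / eps))).
    destruct (archimed (C / eps)) as [A1 A2].
    assert (Hp : 0 < C / eps) by (apply Rdiv_lt_0_compat; lra).
    assert (INR (S (Z.to_nat (up (C / eps)))) > C / eps).
    { rewrite S_INR, INR_IZR_INZ, Z2Nat.id by (apply up_pos; lra). lra. }
    pose proof (INR_S_pos (Z.to_nat (up (C / eps)))).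
    apply (Rmult_lt_reg_r (INR (S (Z.to_nat (up (C / eps)))))). lra.
    unfold Rdiv. rewrite Rmult_assoc, Rinv_l, Rmult_1_r by lra.
    apply (Rmult_lt_reg_r (/ eps)). apply Rinv_0_lt_compat; lra.
    replace (eps * INR (S (Z.to_nat (up (C * / eps)))) * / eps) with (INR (S (Z.to_nat (up (C * / eps))))) by (field; lra).
    unfold Rdiv in H. lra.
Qed.

Section Compact.
Variables (f : nat -> R -> R) (v : nat -> R) (A L : R).
Hypothesis HL0 : 0 <= L.
Hypothesis Hfb : forall n x, in01 x -> 0 <= f n x <= A.
Hypothesis Hlip : forall n x y, in01 x -> in01 y -> Rabs (f n x - f n y) <= L * Rabs (x - y).
Hypothesis Hvb : forall n, 0 <= v n <= A.

Definition eps_m m := (2 * L + 1) / INR (S m).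
Definition Good m (Q : nat -> Prop) := forall n n', Q n -> Q n' ->
  (forall x, in01 x -> Rabs (f n x - f n' x) <= eps_m m) /\ Rabs (v n - v n') <= eps_m m.

Lemma grid_in m i : (i <= S m)%nat -> in01 (INR i / INR (S m)).
Proof.
  intros Hi. pose proof (INR_S_pos m). apply le_INR in Hi. unfold in01. split.
  - apply Rmult_le_pos. apply pos_INR. left; apply Rinv_0_lt_compat; lra.
  - apply (Rmult_le_reg_r (INR (S m))). lra. unfold Rdiv. rewrite Rmult_assoc, Rinv_l by lra. lra.
Qed.

Lemma refine m Pn : inf Pn -> exists Q, inf Q /\ (forall n, Q n -> Pn n) /\ Good m Q.
Proof.
  intros Hinf. pose proof (INR_S_pos m) as Hm.
  set (h := 1 / INR (S m)).
  assert (Hh : 0 < h) by (unfold h; apply Rdiv_lt_0_compat; lra).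
  set (bs := map (fun i => fun n => bin h (f n (INR i / INR (S m)))) (seq 0 (S (S m)))
             ++ (fun n => bin h (v n)) :: nil).
  destruct (pigeonL bs (Z.to_nat (up (A / h))) Pn Hinf) as [Q [HQ1 [HQ2 HQ3]]].
  { intros b Hb n _. unfold bs in Hb. apply in_app_iff in Hb. destruct Hb as [Hb|[<-|[]]].
    - apply in_map_iff in Hb. destruct Hb as [i [<- Hi]]. apply in_seq in Hi.
      apply bin_bound; auto. apply Hfb. apply grid_in. lia.
    - apply bin_bound; auto. }
  exists Q. split; auto. split; auto. intros n n' Hn Hn'.
  assert (Hv : Rabs (v n - v n') < h).
  { apply bin_close; auto. apply Hvb. apply Hvb.
    apply (HQ3 (fun n => bin h (v n))); auto. unfold bs. apply in_app_iff. right; left; auto. }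
  assert (Heps : eps_m m = 2 * L * h + h) by (unfold eps_m, h; field; lra).
  split.
  - intros x Hx. destruct (grid m x Hx) as [i [Hi Hxi]]. fold h in Hxi.
    set (xi := INR i / INR (S m)) in *.
    assert (Hxi' : in01 xi) by (apply grid_in; auto).
    assert (Hc : Rabs (f n xi - f n' xi) < h).
    { apply bin_close; auto. apply Hfb; auto. apply Hfb; auto.
      apply (HQ3 (fun n => bin h (f n xi))); auto. unfold bs. apply in_app_iff. left.
      apply in_map_iff. exists i. split; auto. apply in_seq. lia. }
    assert (H1 := Hlip n x xi Hx Hxi'). assert (H2 := Hlip n' xi x Hxi' Hx).
    rewrite (Rabs_minus_sym xi x) in H2.
    assert (L * Rabs (x - xi) <= L * h) by (apply Rmult_le_compat_l; auto).
    rewrite Heps.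
    replace (f n x - f n' x) with ((f n x - f n xi) + (f n xi - f n' xi) + (f n' xi - f n' x)) by ring.
    eapply Rle_trans. apply Rabs_triang. eapply Rle_trans. apply Rplus_le_compat_r. apply Rabs_triang.
    lra.
  - rewrite Heps. assert (0 <= 2 * L * h) by (apply Rmult_le_pos; lra). lra.
Qed.


Definition topQ : {Q : nat -> Prop | inf Q} :=
  exist _ (fun _ => True) (fun N => ex_intro _ N (conj (le_n N) I)).
Definition stepQ m (P0 : {Q : nat -> Prop | inf Q}) :
  {Q : nat -> Prop | inf Q /\ (forall n, Q n -> proj1_sig P0 n) /\ Good m Q} :=
  constructive_indefinite_description _ (refine m (proj1_sig P0) (proj2_sig P0)).
Fixpoint Qs (m : nat) : {Q : nat -> Prop | inf Q} :=
  match m with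
  | O => let r := stepQ O topQ in exist _ (proj1_sig r) (proj1 (proj2_sig r))
  | S m' => let r := stepQ (S m') (Qs m') in exist _ (proj1_sig r) (proj1 (proj2_sig r))
  end.

Lemma Qs_good m : Good m (proj1_sig (Qs m)).
Proof. destruct m; [exact (proj2 (proj2 (proj2_sig (stepQ 0 topQ))))|exact (proj2 (proj2 (proj2_sig (stepQ (S m) (Qs m)))))]. Qed.

Lemma Qs_sub m n : proj1_sig (Qs (S m)) n -> proj1_sig (Qs m) n.
Proof. simpl. intros H. exact (proj1 (proj2 (proj2_sig (stepQ (S m) (Qs m)))) n H). Qed.

Lemma Qs_mono m k n : (m <= k)%nat -> proj1_sig (Qs k) n -> proj1_sig (Qs m) n.
Proof.
  intros H. induction H; auto. intros Hn. apply IHle. apply Qs_sub. auto.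
Qed.

Definition pick (Q : {Q : nat -> Prop | inf Q}) N : {n | (N <= n)%nat /\ proj1_sig Q n} :=
  constructive_indefinite_description _ (proj2_sig Q N).
Fixpoint phi (k : nat) : nat :=
  match k with
  | O => proj1_sig (pick (Qs O) O)
  | S k' => proj1_sig (pick (Qs (S k')) (S (phi k')))
  end.

Lemma phi_in k : proj1_sig (Qs k) (phi k).
Proof. destruct k; [exact (proj2 (proj2_sig (pick (Qs 0) 0)))|exact (proj2 (proj2_sig (pick (Qs (S k)) (S (phi k)))))]. Qed.

Lemma phi_incr k : (phi k < phi (S k))%nat.
Proof.
  change (phi (S k)) with (proj1_sig (pick (Qs (S k)) (S (phi k)))).
  pose proof (proj1 (proj2_sig (pick (Qs (S k)) (S (phi k))))). lia. Qed.

Lemma close m k k' : (m <= k)%nat -> (m <= k')%nat ->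
  (forall x, in01 x -> Rabs (f (phi k) x - f (phi k') x) <= eps_m m) /\
  Rabs (v (phi k) - v (phi k')) <= eps_m m.
Proof.
  intros H1 H2. apply (Qs_good m).
  apply (Qs_mono m k); auto; apply phi_in.
  apply (Qs_mono m k'); auto; apply phi_in.
Qed.

Lemma cauchy_f x : Cauchy_crit (fun k => f (phi k) (clamp x)).
Proof.
  intros eps He. destruct (small_eps (2 * L + 1) eps He) as [m Hm].
  exists m. intros n n' Hn Hn'. unfold Rdist.
  destruct (close m n n' Hn Hn') as [H _]. specialize (H (clamp x) (clamp_in x)).
  unfold eps_m in H. lra.
Qed.

Lemma cauchy_v : Cauchy_crit (fun k => v (phi k)).
Proof.
  intros eps He. destruct (small_eps (2 * L + 1) eps He) as [m Hm].
  exists m. intros n n' Hn Hn'. unfold Rdist.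
  destruct (close m n n' Hn Hn') as [_ H]. unfold eps_m in H. lra.
Qed.

Lemma compactness : exists (ph : nat -> nat) (g : R -> R) (l : R),
  (forall k, (ph k < ph (S k))%nat) /\
  (forall m k x, (m <= k)%nat -> in01 x -> Rabs (f (ph k) x - g x) <= eps_m m) /\
  Un_cv (fun k => v (ph k)) l /\
  (forall x, in01 x -> Un_cv (fun k => f (ph k) x) (g x)).
Proof.
  set (g := fun x => proj1_sig (Rcomplete.R_complete _ (cauchy_f x))).
  assert (Hg : forall x, in01 x -> Un_cv (fun k => f (phi k) x) (g x)).
  { intros x Hx. unfold g. destruct (Rcomplete.R_complete _ (cauchy_f x)) as [l Hl]. simpl.
    rewrite clamp_id in Hl; auto. }
  destruct (Rcomplete.R_complete _ cauchy_v) as [l Hl].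
  exists phi, g, l. split. apply phi_incr. split; [|split; auto].
  intros m k x Hmk Hx. apply le_epsilon. intros eta He.
  destruct (Hg x Hx eta He) as [K HK].
  set (k' := max K m). specialize (HK k' ltac:(unfold k'; lia)). unfold Rdist in HK.
  destruct (close m k k' Hmk ltac:(unfold k'; lia)) as [H _]. specialize (H x Hx).
  replace (f (phi k) x - g x) with ((f (phi k) x - f (phi k') x) + (f (phi k') x - g x)) by ring.
  eapply Rle_trans. apply Rabs_triang. lra.
Qed.

End Compact.

Lemma ph_ge (ph : nat -> nat) : (forall k, (ph k < ph (S k))%nat) -> forall k, (k <= ph k)%nat.
Proof. intros H k. induction k. lia. specialize (H k). lia. Qed.

Lemma Rint_of_cont f : cont01 f -> Riemann_integrable f 0 1.
Proof.
  intros H. apply (Riemann_integrable_ext (ext f)).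
  - intros x Hx. rewrite Rmin_left in Hx by lra. rewrite Rmax_right in Hx by lra.
    apply ext_id. exact Hx.
  - apply continuity_implies_RiemannInt. lra. intros; apply ext_cont; auto.
Qed.

Lemma RiemannInt_P f (pr : Riemann_integrable f 0 1) : cont01 f -> RiemannInt pr = P f 1.
Proof.
  intros H. rewrite <- RInt_Reals. unfold P. apply RInt_ext.
  intros x Hx. rewrite Rmin_left in Hx by lra. rewrite Rmax_right in Hx by lra.
  symmetry; apply ext_id. unfold in01; lra.
Qed.

Lemma sol_cont dS dI Lam beta gamma mu S I : pos_sol_E dS dI Lam beta gamma mu S I -> cont01 I.
Proof. intros [_ [_ [S1 [S2 [I1 [I2 [_ [[H _] _]]]]]]]]. exact H. Qed.

Theorem theorem3p2
  (Lam beta gamma mu : R -> R) (dS : R)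
  (HLam : holder01 Lam) (Hbeta : holder01 beta)
  (Hgamma : holder01 gamma) (Hmu : holder01 mu)
  (pLam : pos01 Lam) (pbeta : pos01 beta)
  (pgamma : pos01 gamma) (pmu : pos01 mu)
  (HdS : 0 < dS)
  (St : R -> R) (HSt : is_Stilde dS Lam St)
  (Hne : exists x, in01 x /\ beta x * St x > gamma x + mu x)
  (dI : nat -> R) (HdIpos : forall n, 0 < dI n) (HdI : Un_cv dI 0)
  (Sn In : nat -> R -> R)
  (Hsol : forall n, pos_sol_E dS (dI n) Lam beta gamma mu (Sn n) (In n)) :
  exists (phi : nat -> nat) (S0 : R -> R) (I0 : R),
    (forall k, (phi k < phi (S k))%nat) /\
    cont01 S0 /\ pos01 S0 /\
    (forall eps, 0 < eps -> exists N, forall k, (N <= k)%nat ->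
       forall x, in01 x -> Rabs (Sn (phi k) x - S0 x) < eps) /\
    0 < I0 /\
    exists pr : forall k, Riemann_integrable (In (phi k)) 0 1,
      Un_cv (fun k => RiemannInt (pr k)) I0.
Proof.
  assert (cL := holder_cont _ HLam). assert (cb := holder_cont _ Hbeta).
  assert (cg := holder_cont _ Hgamma). assert (cm := holder_cont _ Hmu).
  destruct (cont_max _ cL) as [LM HLM]. destruct (cont_min _ cL pLam) as [Lm [HLm HLm']].
  destruct (cont_max _ cb) as [bM HbM]. destruct (cont_min _ cb pbeta) as [bm [Hbm Hbm']].
  destruct (cont_max _ cg) as [gM HgM]. destruct (cont_min _ cg pgamma) as [gm [Hgm Hgm']].
  destruct (cont_min _ cm pmu) as [mm [Hmm Hmm']].
  assert (HL : forall x, in01 x -> Lm <= Lam x <= LM) by (intros; split; auto).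
  assert (Hb : forall x, in01 x -> bm <= beta x <= bM) by (intros; split; auto).
  assert (Hg : forall x, in01 x -> gm <= gamma x <= gM) by (intros; split; auto).
  assert (Hpos : 0 < Lm /\ 0 < bm /\ 0 < gm /\ 0 < mm) by auto.
  assert (H0 : in01 0) by (unfold in01; lra).
  assert (HbM0 : 0 < bM) by (specialize (Hb 0 H0); lra).
  assert (HLM0 : 0 < LM) by (specialize (HL 0 H0); lra).
  assert (HgM0 : 0 < gM) by (specialize (Hg 0 H0); lra).
  set (c := Rmin Lm (gm / bM)).
  assert (Hc : 0 < c) by (unfold c; apply Rmin_pos; [lra|apply Rdiv_lt_0_compat; lra]).
  set (Cup := Rmax LM (gM / bm)).
  assert (HCup : 0 < Cup) by (unfold Cup; eapply Rlt_le_trans; [apply HLM0|apply Rmax_l]).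
  set (L := Lip dS LM gM mm).
  assert (HL0 : 0 <= L).
  { unfold L, Lip. apply Rmult_le_pos; [|left; apply Rinv_0_lt_compat; lra].
    assert (0 <= gM * (LM / mm)) by (apply Rmult_le_pos; [lra|apply Rmult_le_pos; [lra|left; apply Rinv_0_lt_compat; lra]]).
    lra. }
  set (A := Rmax Cup (LM / mm)).
  set (v := fun n => P (In n) 1).
  assert (Slo : forall n x, in01 x -> c <= Sn n x)
    by (intros; exact (S_lower Lam beta gamma mu dS (dI n) (Sn n) (In n) Lm LM bm bM gm gM mm HdS (Hsol n) HL Hb Hg Hpos x H)).
  assert (Sup : forall n x, in01 x -> Sn n x <= Cup)
    by (intros; exact (S_upper Lam beta gamma mu dS (dI n) (Sn n) (In n) Lm LM bm bM gm gM mm HdS (Hsol n) HL Hb Hg Hpos x H)).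
  assert (Jb : forall n, v n <= LM / mm)
    by (intros; exact (I_int_bound Lam beta gamma mu dS (dI n) (Sn n) (In n) Lm LM bm gm mm (Hsol n) HL Hmm' Hpos)).
  assert (Jpos : forall n, 0 <= v n)
    by (intros; exact (proj1 (PI_bounds Lam beta gamma mu dS (dI n) (Sn n) (In n) (Hsol n) 1 ltac:(unfold in01; lra)))).
  assert (Slip : forall n x y, in01 x -> in01 y -> Rabs (Sn n x - Sn n y) <= L * Rabs (x - y))
    by (intros; exact (S_lip Lam beta gamma mu dS (dI n) (Sn n) (In n) Lm LM bm bM gm gM mm HdS (Hsol n) HL Hb Hg Hmm' Hpos x y H H1)).
  assert (SA : forall n x, in01 x -> St x - Sn n x <= (2 + dS) * (bM * Cup * v n / dS))
    by (intros; exact (stepA Lam beta gamma mu dS (dI n) (Sn n) (In n) St Lm LM bm bM gm gM mm HdS (Hsol n) HSt HL Hb Hg Hpos x H)).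
  destruct (compactness Sn v A L HL0) as [ph [g [l [Hph [Hunif [Hv Hpt]]]]]].
  { intros n x Hx. split. specialize (Slo n x Hx); lra.
    eapply Rle_trans. apply Sup; auto. apply Rmax_l. }
  { auto. }
  { intros n. split; auto. eapply Rle_trans. apply Jb. apply Rmax_r. }
  assert (Heps : forall eps, 0 < eps -> exists m, eps_m L m < eps).
  { intros eps He. unfold eps_m. apply small_eps; auto. }
  assert (Heps0 : forall m, 0 <= eps_m L m).
  { intros m. unfold eps_m. apply Rmult_le_pos. lra. left; apply Rinv_0_lt_compat, INR_S_pos. }
  exists ph, g, l. split; auto. split; [|split; [|split; [|split]]].
  -
    apply eps_cont01. intros x Hx eps He.
    destruct (Heps (eps / 3)) as [m Hm]. lra.
    exists (eps / 3 / (L + 1)). split. apply Rdiv_lt_0_compat; lra.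
    intros y Hy Hyx.
    assert (A1 := Hunif m m x (le_n m) Hx). assert (A2 := Hunif m m y (le_n m) Hy).
    assert (A3 := Slip (ph m) y x Hy Hx).
    assert (L * Rabs (y - x) <= (L + 1) * (eps / 3 / (L + 1))).
    { apply Rmult_le_compat; try lra. apply Rabs_pos. }
    replace ((L + 1) * (eps / 3 / (L + 1))) with (eps / 3) in H by (field; lra).
    replace (g y - g x) with ((g y - Sn (ph m) y) + (Sn (ph m) y - Sn (ph m) x) + (Sn (ph m) x - g x)) by ring.
    eapply Rle_lt_trans. apply Rabs_triang. eapply Rle_lt_trans. apply Rplus_le_compat_r, Rabs_triang.
    rewrite (Rabs_minus_sym (g y)). lra.
  -
    intros x Hx. apply Rlt_le_trans with c; auto.
    apply le_epsilon. intros eta He. destruct (Heps eta He) as [m Hm].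
    assert (A1 := Hunif m m x (le_n m) Hx). assert (A2 := Slo (ph m) x Hx).
    unfold Rabs in A1; destruct Rcase_abs in A1; lra.
  - intros eps He. destruct (Heps eps He) as [m Hm]. exists m. intros k Hk x Hx.
    assert (A1 := Hunif m k x Hk Hx). lra.
  -
    apply Rnot_le_lt. intro Hl0.
    destruct Hne as [x0 [Hx0 HF0]].
    set (G := fun x => ext beta x * ext St x - ext gamma x - ext mu x).
    destruct HSt as [HSt0 [T1 [T2 [[cT _] _]]]].
    assert (cG : continuity_pt G x0).
    { unfold G. ctac. all: apply ext_cont; assumption. }
    set (d0 := G x0).
    assert (Hd0e : d0 = beta x0 * St x0 - gamma x0 - mu x0) by (unfold d0, G; rewrite !ext_id by auto; ring).
    assert (Hd0 : 0 < d0) by lra.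
    destruct (cont_pt_eps G x0 cG (d0 / 2)) as [rho [Hrho Hrho']]. lra.
    set (r := Rmin rho (1/2)).
    assert (Hr : 0 < r) by (unfold r; apply Rmin_pos; lra).
    assert (Hr1 := Rmin_l rho (1/2)). assert (Hr2 := Rmin_r rho (1/2)). fold r in Hr1, Hr2.
    assert (Hint : exists p q, 0 < p < q /\ q < 1 /\ forall x, p <= x <= q -> Rabs (x - x0) < rho).
    { unfold in01 in Hx0. destruct (Rle_lt_dec x0 (1/2)).
      - exists (x0 + r/4), (x0 + r/2). split; [lra|split; [lra|]]. intros x Hx.
        unfold Rabs; destruct Rcase_abs; lra.
      - exists (x0 - r/2), (x0 - r/4). split; [lra|split; [lra|]]. intros x Hx.
        unfold Rabs; destruct Rcase_abs; lra. }
    destruct Hint as [p [q [Hpq [Hq1 Hpqx]]]].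
    set (dl := d0 / 4).
    assert (HFpq : forall x, p <= x <= q -> beta x * St x - gamma x - mu x >= 2 * dl).
    { intros x Hx. specialize (Hrho' x (Hpqx x Hx)).
      assert (in01 x) by (unfold in01; lra).
      unfold G in Hrho'. fold G in Hrho'. fold d0 in Hrho'. rewrite !ext_id in Hrho' by auto.
      unfold dl. unfold Rabs in Hrho'; destruct Rcase_abs in Hrho'; lra. }
    set (Kst := (2 + dS) * bM * Cup / dS).
    assert (HKst : 0 <= Kst).
    { unfold Kst. apply Rmult_le_pos; [|left; apply Rinv_0_lt_compat; lra].
      repeat apply Rmult_le_pos; lra. }
    set (om2 := (PI / (q - p)) ^ 2).
    assert (Hom2 : 0 <= om2) by (unfold om2; apply pow2_ge_0).
    assert (Hdl : 0 < dl) by (unfold dl; lra).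
    set (eta0 := dl / (Kst * bM + 1)).
    assert (Heta0 : 0 < eta0) by (unfold eta0; apply Rdiv_lt_0_compat; [lra|]; 
      assert (0 <= Kst * bM) by (apply Rmult_le_pos; lra); lra).
    set (eta1 := dl / (om2 + 1)).
    assert (Heta1 : 0 < eta1) by (unfold eta1; apply Rdiv_lt_0_compat; lra).
    destruct (HdI eta1 Heta1) as [N1 HN1].
    destruct (Hv eta0 Heta0) as [N2 HN2].
    set (k := max N1 N2).
    assert (Hk := ph_ge ph Hph k).
    specialize (HN1 (ph k) ltac:(unfold k in *; lia)).
    specialize (HN2 k ltac:(unfold k; lia)).
    unfold R_dist in HN1, HN2. rewrite Rminus_0_r in HN1.
    assert (HdIk := HdIpos (ph k)).
    rewrite Rabs_pos_eq in HN1 by lra.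
    assert (Hvk : v (ph k) < eta0) by (unfold Rabs in HN2; destruct Rcase_abs in HN2; lra).
    assert (Hw : forall x, in01 x -> bM * (St x - Sn (ph k) x) <= dl).
    { intros x Hx. specialize (SA (ph k) x Hx).
      replace ((2 + dS) * (bM * Cup * v (ph k) / dS)) with (Kst * v (ph k)) in SA
        by (unfold Kst; field; lra).
      assert (Kst * v (ph k) * bM <= Kst * bM * eta0).
      { replace (Kst * v (ph k) * bM) with (Kst * bM * v (ph k)) by ring.
        apply Rmult_le_compat_l. apply Rmult_le_pos; lra. lra. }
      assert (Kst * bM * eta0 <= dl).
      { unfold eta0. assert (0 <= Kst * bM) by (apply Rmult_le_pos; lra).
        apply (Rmult_le_reg_r (Kst * bM + 1)). lra.
        replace (Kst * bM * (dl / (Kst * bM + 1)) * (Kst * bM + 1)) with (Kst * bM * dl) by (field; lra).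
        nra. }
      nra. }
    destruct (Hsol (ph k)) as [HS [HI [S1 [S2 [I1 [I2 [HnS [[cI [cI1 [dI0 [dI1 _]]]] [ES EI]]]]]]]]].
    apply (sturm (ext (In (ph k))) (ext I1) I2 p q (dI (ph k)) dl).
    + lra.
    + auto.
    + auto.
    + fold om2. unfold eta1 in HN1.
      assert (om2 * dI (ph k) <= (om2 + 1) * dI (ph k)) by nra.
      assert ((om2 + 1) * dI (ph k) < dl).
      { apply (Rmult_lt_reg_r (/ (om2 + 1))). apply Rinv_0_lt_compat; lra.
        replace ((om2 + 1) * dI (ph k) * / (om2 + 1)) with (dI (ph k)) by (field; lra). exact HN1. }
      lra.
    + intros; apply ext_cont; auto.
    + intros; apply ext_cont; auto.
    + intros x Hx. eapply deq. apply ext_deriv. lra. apply dI0. lra.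
      rewrite ext_id by (unfold in01; lra). reflexivity.
    + intros x Hx. apply ext_deriv. lra. apply dI1. lra.
    + intros x Hx. rewrite ext_id by (unfold in01; lra). apply HI. unfold in01; lra.
    + intros x Hx. assert (Hx' : in01 x) by (unfold in01; lra).
      rewrite ext_id by exact Hx'.
      specialize (EI x ltac:(lra)). specialize (HFpq x ltac:(lra)). specialize (Hw x Hx').
      specialize (HI x Hx'). destruct (Hb x Hx').
      assert (beta x * (St x - Sn (ph k) x) <= dl).
      { destruct (Rle_lt_dec 0 (St x - Sn (ph k) x)).
        - assert (beta x * (St x - Sn (ph k) x) <= bM * (St x - Sn (ph k) x)) by (apply Rmult_le_compat_r; lra). lra.
        - assert (beta x * (St x - Sn (ph k) x) <= 0). { apply Rmult_le_0_l; lra. } lra. }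
      assert (Hrel : beta x * Sn (ph k) x - gamma x - mu x >= dl) by nra.
      assert (Heq : dI (ph k) * I2 x = - ((beta x * Sn (ph k) x - gamma x - mu x) * In (ph k) x)) by nra.
      rewrite Heq. assert (dl * In (ph k) x <= (beta x * Sn (ph k) x - gamma x - mu x) * In (ph k) x)
        by (apply Rmult_le_compat_r; lra). lra.
  -
    assert (cIn : forall k, cont01 (In (ph k))) by (intros; eapply sol_cont; apply Hsol).
    exists (fun k => Rint_of_cont (In (ph k)) (cIn k)).
    intros eps He. destruct (Hv eps He) as [N HN]. exists N. intros n Hn.
    rewrite RiemannInt_P by auto. apply HN; auto.
Qed.
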